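(* Let $\operatorname{T}_2=\{x_1,x_2\}$ be the trivial quandle with two elements. Then $\operatorname{Aut}(\mathbb{Z}[\operatorname{T}_2])\cong\mathbb{Z}\rtimes\mathbb{Z}_2$.
   Context: A trivial quandle is a set $\operatorname{T}$ with operation $xy=x$ for all $x,y$. The quandle ring $\mathbb{Z}[\operatorname{T}]$ is the free abelian group with basis $\operatorname{T}$, with multiplication $\big(\sum_i\alpha_i x_i\big)\big(\sum_j\beta_j x_j\big)=\sum_{i,j}\alpha_i\beta_j (x_ix_j)$. $\operatorname{Aut}(\mathbb{Z}[\operatorname{T}])$ denotes the group of ring automorphisms of $\mathbb{Z}[\operatorname{T}]$ (bijective additive maps preserving the multiplication). *)

(* Defs.v *)
From HB Require Import structures.
From mathcomp Require Import all_boot all_order all_algebra.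
Set Implicit Arguments. Unset Strict Implicit. Unset Printing Implicit Defensive.
Import GRing.Theory.
Local Open Scope ring_scope.

Definition trivial_op (T : Type) (x y : T) : T := x.

(* The quandle ring Z[T]: free abelian group on basis T, i.e. finitely
   supported (here: T finite) integer-valued functions on T. *)
Definition qring (T : finType) := {ffun T -> int}.

(* Multiplication: (sum_i a_i x_i)(sum_j b_j x_j) = sum_{i,j} a_i b_j (x_i x_j). *)
Definition qmul (T : finType) (op : T -> T -> T) (u v : qring T) : qring T :=
  [ffun z => \sum_(i : T) \sum_(j : T | op i j == z) u i * v j].

Definition is_ring_aut (T : finType) (op : T -> T -> T)
  (f : qring T -> qring T) : Prop :=
  [/\ bijective f,
      (forall u v, f (u + v) = f u + f v)
    & (forall u v, f (qmul op u v) = qmul op (f u) (f v))].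

Definition T2 := 'I_2.

(* The semidirect product Z ⋊ Z_2, Z_2 = (bool, xor) acting on Z by negation:
   (a, s) * (b, t) = (a + (-1)^s b, s + t). *)
Definition sdmul (p q : int * bool) : int * bool :=
  (p.1 + (if p.2 then - q.1 else q.1), addb p.2 q.2).

(* Main.v *)
Require Import Defs.
From mathcomp Require Import all_boot all_order all_algebra zify ring.
From Stdlib Require Import FunctionalExtensionality.
Set Implicit Arguments. Unset Strict Implicit. Unset Printing Implicit Defensive.
Import GRing.Theory.
Local Open Scope ring_scope.

Lemma int_pm1 (u c : int) : u * c = 1 -> c = 1 \/ c = -1.
Proof.
move=> H.
have: (c <= -2) \/ (c = -1) \/ c = 0 \/ c = 1 \/ 2 <= c by lia.
case=> [H1|[H1|[H1|[H1|H1]]]]; try by [left|right].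
- have: (u <= -1) \/ u = 0 \/ 1 <= u by lia. case=> [H2|[H2|H2]]; nia.
- subst; rewrite mulr0 in H; done.
- have: (u <= -1) \/ u = 0 \/ 1 <= u by lia. case=> [H2|[H2|H2]]; nia.
Qed.

Definition o0 : T2 := ord0.
Definition o1 : T2 := ord_max.

Lemma T2cases (z : T2) : z = o0 \/ z = o1.
Proof. case: z => [[|[|//]] Hz]; [left|right]; apply: val_inj => //. Qed.

Lemma o10 : (o1 == o0) = false. Proof. by []. Qed.

Definition eps (v : qring T2) : int := v o0 + v o1.

Lemma qmulE (u v : qring T2) : qmul (@trivial_op T2) u v = [ffun z => u z * eps v].
Proof.
apply/ffunP => z; rewrite !ffunE /eps /trivial_op.
rewrite (eq_bigr (fun i => if i == z then u i * (v o0 + v o1) else 0)).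
  rewrite -big_mkcond big_pred1_eq. done.
move=> i _; case: eqP => _; last by rewrite big_pred0.
rewrite -mulr_sumr big_ord_recl big_ord1.
by have -> : lift ord0 (ord0 : 'I_1) = o1 :> T2 by apply: val_inj.
Qed.

Definition sig (s : bool) : int := if s then -1 else 1.

Definition Fm (a : int * bool) (u : qring T2) : qring T2 :=
  [ffun z => if z == o0 then u o0 * (1 + a.1) + u o1 * (1 + a.1 - sig a.2)
             else u o0 * (- a.1) + u o1 * (sig a.2 - a.1)].

Definition e0 : qring T2 := [ffun z => if z == o0 then 1 else 0].
Definition e1 : qring T2 := [ffun z => if z == o0 then 0 else 1].

Definition phi (f : qring T2 -> qring T2) : int * bool :=
  (- f e0 o1, (f e0 o0 - f e1 o0) == -1).

Lemma FF a b : Fm a \o Fm b = Fm (sdmul a b).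
Proof.
apply: functional_extensionality => u; apply/ffunP => z.
case: a b => [k s] [k' s']; rewrite /= !ffunE /sdmul /= ?eqxx ?o10.
by case: (T2cases z) => ->; rewrite ?eqxx ?o10; case: s; case: s'; rewrite /sig /=; ring.
Qed.

Lemma F0 : Fm (0, false) = id.
Proof.
apply: functional_extensionality => u; apply/ffunP => z.
rewrite /= !ffunE /sig /=.
by case: (T2cases z) => ->; rewrite ?eqxx ?o10; ring.
Qed.

Lemma phiF a : phi (Fm a) = a.
Proof.
case: a => k s; rewrite /phi /e0 /e1 !ffunE /= ?eqxx ?o10 /=.
congr pair; first by ring.
case: s; rewrite /sig.
  by rewrite (_ : _ - _ = -1) ?eqxx //; ring.
by rewrite (_ : _ - _ = 1) //; ring.
Qed.

Lemma epsF a v : eps (Fm a v) = eps v.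
Proof. by rewrite /eps !ffunE eqxx o10; ring. Qed.

Lemma Faut a : is_ring_aut (@trivial_op T2) (Fm a).
Proof.
split.
- exists (Fm (- (sig a.2) * a.1, a.2)) => u.
  + rewrite -[Fm _ (Fm _ u)]/((Fm _ \o Fm _) u) FF.
    rewrite (_ : sdmul _ _ = (0, false)) ?F0 //.
    case: a => k s; case: s; rewrite /sdmul /sig /=; congr pair; ring.
  + rewrite -[Fm _ (Fm _ u)]/((Fm _ \o Fm _) u) FF.
    rewrite (_ : sdmul _ _ = (0, false)) ?F0 //.
    case: a => k s; case: s; rewrite /sdmul /sig /=; congr pair; ring.
- move=> u v; apply/ffunP => z; rewrite !ffunE.
  by case: ifP => _; ring.
- move=> u v; rewrite !qmulE epsF; apply/ffunP => z; rewrite !ffunE.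
  by case: ifP => _; ring.
Qed.

Lemma recon f : is_ring_aut (@trivial_op T2) f -> f = Fm (phi f).
Proof.
case=> Hb Hadd Hmul.
have f0 : f 0 = 0.
  have H := Hadd 0 0; rewrite addr0 in H.
  by apply: (addrI (f 0)); rewrite addr0 -H.
have fN u : f (- u) = - f u.
  have: f (- u) + f u = 0 by rewrite -Hadd addNr.
  by move/eqP; rewrite addr_eq0 => /eqP.
have fMn u n : f (u *+ n) = f u *+ n.
  elim: n => [|n IH]; first by rewrite !mulr0n.
  by rewrite !mulrS Hadd IH.
have fMz u n : f (u *~ n) = f u *~ n.
  case: n => m; first exact: fMn.
  by rewrite !NegzE !mulrNz fN fMn.
have dec (u : qring T2) : u = e0 *~ u o0 + e1 *~ u o1.
  apply/ffunP => z; rewrite !ffunE !ffunMzE !ffunE !mulrzz.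
  by case: (T2cases z) => ->; rewrite ?eqxx ?o10; ring.
have lin (u : qring T2) z : f u z = f e0 z * u o0 + f e1 z * u o1.
  by rewrite {1}(dec u) Hadd !fMz !ffunE !ffunMzE !mulrzz.
case: Hb => g gK fK.
have Heps v : eps (f v) = eps v.
  have H := Hmul (g e0) v.
  have E : qmul (@trivial_op T2) (g e0) v = g e0 *~ eps v.
    by rewrite qmulE; apply/ffunP => z; rewrite ffunE ffunMzE mulrzz.
  rewrite E fMz fK qmulE in H.
  have := congr1 (fun w : qring T2 => w o0) H.
  by rewrite /= !ffunE ffunMzE ffunE eqxx mulrzz !mul1r => ->.
set p := f e0; set q := f e1.
have Hp : p o0 + p o1 = 1 by rewrite -/(eps p) /p Heps /eps !ffunE eqxx o10.
have Hq : q o0 + q o1 = 1 by rewrite -/(eps q) /q Heps /eps !ffunE eqxx o10.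
pose d : qring T2 := [ffun z => if z == o0 then 1 else -1].
move: (g d) (fK d) => w Hw.

have Hw1 : w o1 = - w o0.
  have := Heps w; rewrite Hw /eps !ffunE eqxx o10 => H.
  by apply/eqP; rewrite -addr_eq0 addrC -H subrr.
have Hc : w o0 * (p o0 - q o0) = 1.
  have := congr1 (fun x : qring T2 => x o0) Hw.
  rewrite /= lin Hw1 -/p -/q ffunE eqxx => <-; ring.
have Hp1 : p o1 = 1 - p o0 by rewrite -Hp; ring.
have Hq1 : q o1 = 1 - q o0 by rewrite -Hq; ring.
apply: functional_extensionality => u; apply/ffunP => z.
rewrite lin -/p -/q /phi -/p -/q ffunE.
case: (int_pm1 Hc) => Hc1.
- rewrite Hc1 /=.
  have Hq0 : q o0 = p o0 - 1 by rewrite -Hc1; ring.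
  rewrite /sig.
  case: (T2cases z) => ->; rewrite ?eqxx ?o10 ?Hp1 ?Hq1 ?Hq0; ring.
- rewrite Hc1 eqxx.
  have Hq0 : q o0 = p o0 + 1.
    have -> : q o0 = p o0 - (p o0 - q o0) by ring.
    by rewrite Hc1 opprK.
  rewrite /sig.
  case: (T2cases z) => ->; rewrite ?eqxx ?o10 ?Hp1 ?Hq1 ?Hq0 /=; ring.
Qed.

Theorem theorem6p1 :
  exists phi : (qring T2 -> qring T2) -> int * bool,
    [/\ (forall f g, is_ring_aut (@trivial_op T2) f ->
                     is_ring_aut (@trivial_op T2) g ->
                     phi (f \o g) = sdmul (phi f) (phi g)),
        (forall f g, is_ring_aut (@trivial_op T2) f ->
                     is_ring_aut (@trivial_op T2) g ->
                     phi f = phi g -> f = g)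
      & (forall p, exists2 f, is_ring_aut (@trivial_op T2) f & phi f = p)].
Proof.
exists phi; split.
- move=> f g Hf Hg.
  by rewrite (recon Hf) (recon Hg) FF !phiF.
- move=> f g Hf Hg E.
  by rewrite (recon Hf) (recon Hg) E.
- move=> a; exists (Fm a); [exact: Faut | exact: phiF].
Qed.
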